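(* Consider the linear time-invariant system $\dot x(t) = Ax(t) + Bu(t) + Ed(t)$, $z(t) = Hx(t)$ with $A\in\mathbb{R}^{n\times n}$, $B\in\mathbb{R}^{n\times m}$, $E\in\mathbb{R}^{n\times \ell}$, $H\in\mathbb{R}^{p\times n}$, under linear state feedback $u(t)=Fx(t)$ with $F\in\mathbb{R}^{m\times n}$. Let $g(t) = He^{(A+BF)t}E$ be the impulse response from $d$ to $z$ and define $\|g\|_{H_2}^2 = \int_0^\infty \mathrm{Tr}(g(\tau)^\top g(\tau))\,d\tau$. Then $\|g\|_{H_2}^2 = 0$ if and only if there exist an integer $k$ and matrices $X\in\mathbb{R}^{k\times k}$, $V\in\mathbb{R}^{n\times k}$ such that $$VX - BFV = AV, \qquad \operatorname{im} E \subseteq \operatorname{im} V \subseteq \ker H.$$ (No internal stability of $A+BF$ is assumed.)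
   Context: $\operatorname{im}$ and $\ker$ denote image and kernel of a matrix. The $H_2$ norm is defined by the (possibly infinite) integral above, without requiring $A+BF$ to be Hurwitz. *)

(* Defs.v *)
From HB Require Import structures.
From mathcomp Require Import all_boot all_order all_algebra.
From mathcomp Require Import all_classical all_reals all_analysis.
Set Implicit Arguments. Unset Strict Implicit. Unset Printing Implicit Defensive.
Import Order.TTheory GRing.Theory Num.Theory numFieldNormedType.Exports.
Local Open Scope ring_scope.
Local Open Scope classical_set_scope.

Definition expm (R : realType) (n : nat) (M : 'M[R]_n) : 'M[R]_n :=
  \matrix_(i, j) limn (series (fun k : nat => (k`!%:R)^-1 * (M ^+ k) i j)).

Definition impulse_resp (R : realType) (n m l p : nat)
  (A : 'M[R]_n) (B : 'M[R]_(n, m)) (E : 'M[R]_(n, l)) (H : 'M[R]_(p, n))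
  (F : 'M[R]_(m, n)) (t : R) : 'M[R]_(p, l) :=
  H *m expm (t *: (A + B *m F)) *m E.

(* Squared H2 norm: \int_0^oo Tr(g(t)^T g(t)) dt, as an extended real
   (possibly +oo; no stability assumed). *)
Definition H2norm2 (R : realType) (p l : nat) (g : R -> 'M[R]_(p, l)) : \bar R :=
  (\int[lebesgue_measure]_(t in `[0%R, +oo[) (\tr ((g t)^T *m g t))%:E)%E.

(* Main.v *)
Require Import Defs.
From HB Require Import structures.
From mathcomp Require Import all_boot all_order all_algebra.
From mathcomp Require Import all_classical all_reals all_analysis.
From mathcomp Require Import ring lra.
Import Order.TTheory GRing.Theory Num.Theory.
Local Open Scope ring_scope.

Section Alg.
Local Set Implicit Arguments. Local Unset Strict Implicit.


Lemma cayley_pow (R : fieldType) n' (M : 'M[R]_n'.+1) :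
  exists c : 'I_n'.+1 -> R, M ^+ n'.+1 = \sum_(i < n'.+1) c i *: M ^+ i.
Proof.
have CH := Cayley_Hamilton M.
move: CH; rewrite /horner_mx /horner_morph horner_coef.
rewrite size_map_inj_poly; last 2 first.
- by move=> a b /matrixP /(_ ord0 ord0); rewrite !mxE /= !mulr1n.
- by rewrite raddf0.
have Hs : size (char_poly M) = n'.+2 := size_char_poly M.
rewrite Hs big_ord_recr /=.
have := char_poly_monic M; move/monicP; rewrite lead_coefE Hs /= => H1.
rewrite coef_map /= H1 mul1r => /eqP; rewrite addrC addr_eq0 => /eqP ->.
exists (fun i => - (char_poly M)`_i).
rewrite -sumrN; apply: eq_bigr => i _.
by rewrite coef_map /= -mulmxE mul_scalar_mx scaleNr.
Qed.

Lemma krylov (R : fieldType) n l p (M : 'M[R]_n) (E : 'M[R]_(n,l)) (H : 'M[R]_(p,n)) :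
  (forall k, H *m (M ^+ k) *m E = 0) ->
  exists k (X : 'M[R]_k) (V : 'M[R]_(n,k)),
    V *m X = M *m V /\ (E^T <= V^T)%MS /\ H *m V = 0.
Proof.
case: n M E H => [|n'] M E H HME.
  exists 0%N, 0, 0; split; first by apply/matrixP => i [].
  split; last by apply/matrixP => i [].
  have -> : E^T = 0 by apply/matrixP => i [].
  exact: sub0mx.
pose S := (\sum_(i < n'.+1) <<(M ^+ i *m E)^T>>)%MS.
have Sinv : (S *m M^T <= S)%MS.
  rewrite sumsmxMr.
  apply/sumsmx_subP => i _.
  rewrite (eqmxMr _ (genmxE _)) -trmx_mul mulmxA (_ : M *m M ^+ i = M ^+ i.+1); last by rewrite exprS mulmxE.
  have [lt|eq] := ltnP i.+1 n'.+1.
    by rewrite /S; apply: (sumsmx_sup (Ordinal lt)) => //; rewrite genmxE.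
  have -> : i.+1 = n'.+1 by apply/eqP; rewrite eqn_leq eq andbT.
  have [c ->] := cayley_pow M.
  rewrite mulmx_suml raddf_sum /=; apply: summx_sub => j _.
  rewrite -scalemxAl linearZ /=; apply: scalemx_sub.
  by rewrite /S; apply: (sumsmx_sup j) => //; rewrite genmxE.
have [D HD] := submxP Sinv.
exists n'.+1, D^T, S^T; split; last split.
- by rewrite -trmx_mul -HD trmx_mul trmxK.
- rewrite trmxK /S; apply: (sumsmx_sup ord0) => //.
  by rewrite genmxE expr0 mul1mx submx_refl.
- apply: trmx_inj; rewrite trmx_mul trmxK trmx0; apply/sub_kermxP.
  apply/sumsmx_subP => i _; rewrite genmxE; apply/sub_kermxP.
  by rewrite -trmx_mul mulmxA HME trmx0.
Qed.

End Alg.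

Import numFieldNormedType.Exports.

Section An.
Local Set Implicit Arguments. Local Unset Strict Implicit.
Local Open Scope classical_set_scope.
Variable R : realType.


Definition u (x : nat -> R) (t : R) := fun k : nat => (k`!%:R)^-1 * (t ^+ k * x k).
Definition goodseq (x : nat -> R) :=
  exists C c, 0 <= C /\ 0 <= c /\ forall k, `|x k| <= C * c ^+ k.

Lemma u_cvg x t : goodseq x -> cvgn (series (u x t)).
Proof.
case=> C [c [C0 [c0 hx]]]; apply: normed_cvg.
have Hv k : (C *: exp_coeff (c * `|t|)) k = C * exp_coeff (c * `|t|) k by [].
apply: (@series_le_cvg _ _ (C *: exp_coeff (c * `|t|))).
- by move=> k /=.
- by move=> k; rewrite Hv mulr_ge0 // exp_coeff_ge0 // mulr_ge0.
- move=> k; rewrite Hv /= /u /exp_coeff /= normrM normrM normrX.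
  rewrite ger0_norm ?invr_ge0 // exprMn.
  have := hx k; have : 0 <= `|t| ^+ k by rewrite exprn_ge0.
  have : 0 <= (k`!%:R : R)^-1 by rewrite invr_ge0.
  move: (`|t| ^+ k) ((k`!%:R : R)^-1) (`|x k|) (c ^+ k) => a b y z ha hb hy.
  have -> : C * (z * a * b) = (b * a) * (C * z) by ring.
  by rewrite mulrA; apply: ler_wpM2l => //; rewrite mulr_ge0.
- exact/is_cvg_seriesZ/is_cvg_series_exp_coeff.
Qed.


Lemma cvg_series_lin (I : Type) (r : seq I) (w : I -> R) (v : I -> nat -> R) :
  (forall i, cvgn (series (v i))) ->
  series (fun k => \sum_(i <- r) w i * v i k) @ \oo -->
    \sum_(i <- r) w i * limn (series (v i)).
Proof.
move=> hv.
have -> : series (fun k => \sum_(i <- r) w i * v i k) =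
          fun N => \sum_(i <- r) w i * series (v i) N.
  apply/funext => N; rewrite /series /=.
  rewrite exchange_big /=; apply: eq_bigr => i _; by rewrite mulr_sumr.
elim: r => [|a r IH].
  rewrite big_nil; under eq_fun do rewrite big_nil; exact: cvg_cst.
rewrite big_cons; under eq_fun do rewrite big_cons.
apply: cvgD => //; apply: cvgMr; exact: hv.
Qed.

Lemma pow_entry_bound n (M : 'M[R]_n) k a b :
  `|(M ^+ k) a b| <= (\sum_i \sum_j `|M i j|) ^+ k.
Proof.
set c := (\sum_i \sum_j `|M i j|).
elim: k a b => [|k IH] a b.
  rewrite expr0 mxE; case: (a == b) => /=; by rewrite ?normr1 ?normr0.
rewrite exprSr -mulmxE mxE exprSr.
apply: le_trans (ler_norm_sum _ _ _) _.
apply: (@le_trans _ _ (\sum_j c ^+ k * `|M j b|)).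
  apply: ler_sum => j _; rewrite normrM; apply: ler_wpM2r => //.
rewrite -mulr_sumr; apply: ler_wpM2l; first by rewrite exprn_ge0 // /c sumr_ge0 // => i _; rewrite sumr_ge0.
apply: ler_sum => j _.
rewrite (bigD1 b) //= lerDl sumr_ge0 //.
Qed.


Lemma entry_good n p l (H : 'M[R]_(p,n)) (M : 'M[R]_n) (E : 'M[R]_(n,l)) i j :
  goodseq (fun k => (H *m M ^+ k *m E) i j).
Proof.
set c := (\sum_a \sum_b `|M a b|).
have c0 : 0 <= c by rewrite sumr_ge0 // => a _; rewrite sumr_ge0.
exists (\sum_b \sum_a `|H i a| * `|E b j|), c; split; last split => //.
  by rewrite sumr_ge0 // => b _; rewrite sumr_ge0 // => a _; rewrite mulr_ge0.
move=> k; rewrite mxE mulr_suml.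
apply: le_trans (ler_norm_sum _ _ _) _; apply: ler_sum => b _.
rewrite normrM mxE.
apply: le_trans (ler_wpM2r (normr_ge0 _) (ler_norm_sum _ _ _)) _.
rewrite !mulr_suml; apply: ler_sum => a _.
rewrite normrM -!mulrA; apply: ler_wpM2l => //; rewrite mulrC.
apply: ler_wpM2l => //; exact: pow_entry_bound.
Qed.

Lemma scale_pow n (M : 'M[R]_n) (t : R) k : (t *: M) ^+ k = t ^+ k *: M ^+ k.
Proof.
elim: k => [|k IH]; first by rewrite !expr0 scale1r.
by rewrite !exprS IH -!mulmxE -scalemxAl -scalemxAr scalerA.
Qed.

Lemma entry_series n p l (H : 'M[R]_(p,n)) (M : 'M[R]_n) (E : 'M[R]_(n,l)) t i j :
  (H *m expm (t *: M) *m E) i j = limn (series (u (fun k => (H *m M ^+ k *m E) i j) t)).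
Proof.
pose ua a b := u (fun k => (M ^+ k) a b) t.
have em a b : expm (t *: M) a b = limn (series (ua a b)).
  rewrite /expm mxE; congr (lim (series _ @ \oo)); apply/funext => k.
  by rewrite /ua /u scale_pow mxE.
have cv a b : cvgn (series (ua a b)).
  apply: u_cvg; exists 1, (\sum_a \sum_b `|M a b|); split => //; split.
    by rewrite sumr_ge0 // => a' _; rewrite sumr_ge0.
  by move=> k; rewrite mul1r; exact: pow_entry_bound.
have inner b : series (fun k => \sum_(a <- index_enum 'I_n) H i a * ua a b k) @ \oo -->
    \sum_(a <- index_enum 'I_n) H i a * limn (series (ua a b)).
  by apply: cvg_series_lin => a.
have outer : series (fun k => \sum_(b <- index_enum 'I_n) E b j *
      (\sum_(a <- index_enum 'I_n) H i a * ua a b k)) @ \oo -->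
    \sum_(b <- index_enum 'I_n) E b j *
      limn (series (fun k => \sum_(a <- index_enum 'I_n) H i a * ua a b k)).
  apply: cvg_series_lin => b; apply/cvg_ex; eexists; exact: inner.
have eu : u (fun k => (H *m M ^+ k *m E) i j) t =
    (fun k => \sum_(b <- index_enum 'I_n) E b j *
      (\sum_(a <- index_enum 'I_n) H i a * ua a b k)).
  apply/funext => k; rewrite /ua /u mxE mulr_sumr mulr_sumr; apply: eq_bigr => b _.
  rewrite mxE mulr_suml mulr_sumr mulr_sumr mulr_sumr; apply: eq_bigr => a _.
  ring.
rewrite eu (cvg_lim _ outer) // mxE; apply: eq_bigr => b _.
rewrite (cvg_lim _ (inner b)) // mxE mulrC; congr (_ * _); apply: eq_bigr => a _.
by rewrite em.
Qed.


Lemma small_zero (y Q : R) : 0 <= Q ->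
  (forall d, 0 < d -> exists t, 0 < t /\ t < d /\ `|y| <= Q * t) -> y = 0.
Proof.
move=> Q0 h; apply/eqP/negPn/negP => ny.
have y0 : 0 < `|y| by rewrite normr_gt0.
have [t [t0 [td ht]]] := h (`|y| / (Q + 1)) (divr_gt0 y0 (ltr_wpDl Q0 ltr01)).
have : Q * t <= Q * (`|y| / (Q + 1)) by apply: ler_wpM2l => //; exact: ltW.
rewrite mulrA; set z := `|y| in y0 ht *.
have Q1 : 0 < Q + 1 by rewrite ltr_wpDl.
rewrite ler_pdivlMr //.
nra.
Qed.


Lemma ps_zero x : goodseq x ->
  (forall d, 0 < d -> exists t, 0 < t /\ t < d /\ t <= 1 /\ limn (series (u x t)) = 0) ->
  forall k, x k = 0.
Proof.
move=> gx hz.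
have [C [c [C0 [c0 hx]]]] := gx.
pose K := limn (series (exp_coeff c)).
have ecv := is_cvg_series_exp_coeff c.
have Kle N : series (exp_coeff c) N <= K.
  apply: nondecreasing_cvgn_le => //; apply: nondecreasing_series => i _ _.
  exact: exp_coeff_ge0.
have K0 : 0 <= K by apply: le_trans (Kle 0%N); rewrite /series /= big_geq.
elim/ltn_ind => k IH.
apply: (@small_zero _ (k`!%:R * (C * K))); first by rewrite !mulr_ge0.
move=> d d0; have [t [t0 [td [t1 ft]]]] := hz d d0.
exists t; split => //; split => //.
have key : `|u x t k| <= t ^+ k.+1 * (C * K).
  have cvs : series (u x t) @ \oo --> 0.
    by rewrite -ft; exact: u_cvg.
  have : (fun N => `|series (u x t) N - u x t k|) @ \oo --> `|0 - u x t k|.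
    by apply: cvg_norm; apply: cvgB => //; exact: cvg_cst.
  rewrite sub0r normrN => /cvgr_to_le; apply.
  exists k.+1 => // N /= hN.
  rewrite /series /= (big_cat_nat (leq0n k) (ltnW hN)) /= (big_ltn hN).
  rewrite big_nat_cond big1 ?add0r; last first.
    by move=> i /andP[/andP[_ hi] _]; rewrite /u IH // !mulr0.
  rewrite addrAC subrr add0r; apply: le_trans (ler_norm_sum _ _ _) _.
  apply: (@le_trans _ _ (\sum_(k.+1 <= i < N) t ^+ k.+1 * (C * exp_coeff c i))).
    apply: ler_sum_nat => i /andP[hi _].
    rewrite /u /exp_coeff /= normrM normrM ger0_norm ?invr_ge0 // normrX ger0_norm; last exact: ltW.
    have tt : t ^+ i <= t ^+ k.+1 by apply: ler_wiXn2l => //; exact: ltW.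
    have xx := hx i.
    have f0 : 0 <= (i`!%:R : R)^-1 by rewrite invr_ge0.
    have ti0 : 0 <= t ^+ i by rewrite exprn_ge0 // ltW.
    have ck0 : 0 <= c ^+ i by rewrite exprn_ge0.
    move: (t ^+ i) (t ^+ k.+1) (c ^+ i) (`|x i|) ((i`!%:R : R)^-1) tt xx f0 ti0 ck0 (normr_ge0 (x i)) => a b e y f tt xx f0 ti0 ck0 y0.
    have b0 : 0 <= b by apply: le_trans ti0 tt.
    have : a * y <= b * (C * e) by apply: ler_pM.
    move=> h; have := ler_wpM2l f0 h; move=> h2.
    apply: le_trans h2 _; rewrite le_eqVlt; apply/orP; left; apply/eqP; ring.
  rewrite -mulr_sumr -mulr_sumr; apply: ler_wpM2l; first by rewrite exprn_ge0 // ltW.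
  apply: ler_wpM2l => //; apply: le_trans (Kle N).
  rewrite /series /= (big_cat_nat (leq0n k.+1) hN) /= lerDr sumr_ge0 // => i _.
  exact: exp_coeff_ge0.
have tk0 : 0 < t ^+ k by rewrite exprn_gt0.
have f0 : 0 < (k`!%:R : R) by rewrite ltr0n fact_gt0.
have fi0 : 0 <= (k`!%:R : R)^-1 by rewrite invr_ge0 ltW.
move: key; rewrite /u normrM normrM normrX (ger0_norm (ltW t0)) (ger0_norm fi0).
rewrite ler_pdivrMl // exprSr -mulrA mulrCA ler_pM2l //.
move=> h; apply: le_trans h _; rewrite le_eqVlt; apply/orP; left; apply/eqP; ring.
Qed.

End An.

From mathcomp Require Import measurable_realfun.

Section Misc.
Local Set Implicit Arguments. Local Unset Strict Implicit.
Local Open Scope classical_set_scope.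

Lemma tr_sq (R : realType) p l (G : 'M[R]_(p, l)) :
  \tr (G^T *m G) = \sum_i \sum_j (G j i) ^+ 2.
Proof.
rewrite /mxtrace; apply: eq_bigr => i _; rewrite mxE; apply: eq_bigr => j _.
by rewrite mxE expr2.
Qed.



Lemma ae_small (R : realType) (f : R -> \bar R) :
  (\int[lebesgue_measure]_(t in `[0%R, +oo[) f t = 0)%E ->
  measurable_fun (`[0%R, +oo[ : set R) f -> (forall t, 0 <= f t)%E ->
  forall d : R, 0 < d -> exists t, 0 < t /\ t < d /\ t <= 1 /\ f t = 0%E.
Proof.
move=> hi mf f0 d d0.
have hi' : (\int[lebesgue_measure]_(t in `[0%R, +oo[) `|f t| = 0)%E.
  by rewrite -hi; apply: eq_integral => t _; rewrite gee0_abs.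
have := (@ae_eq_integral_abs _ _ _ (@lebesgue_measure R) _ (measurable_itv _) f mf).1 hi'.
case=> N [mN N0 sN].
pose m := Num.min d 1.
have m0 : 0 < m by rewrite lt_min d0 ltr01.
have : ~ (`]0%R, m[ `<=` N).
  move=> sub; have := @subset_measure0 _ _ _ (@lebesgue_measure R) _ _ (measurable_itv `]0, m[%R) mN sub N0.
  move=> h0; have h2 : lebesgue_measure (`]0, m[%classic : set R) = 0 := h0.
  move: h2; rewrite lebesgue_measure_itv /= lte_fin m0 sube0 => /eqP.
  by rewrite eqe gt_eqF.
move=> /existsNP [t] /not_implyP [ht tN].
move: ht; rewrite /= in_itv /= => /andP [t0 tm].
exists t; split => //; split; first by apply: lt_le_trans tm _; rewrite ge_min lexx.
split; first by apply: ltW; apply: lt_le_trans tm _; rewrite ge_min lexx orbT.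
apply: contra_notP tN => ft; apply: sN => /= ; apply/not_implyP; split => //.
by rewrite /= in_itv /= andbT ltW.
Qed.

End Misc.

Theorem lemma1 (R : realType) (n m l p : nat)
  (A : 'M[R]_n) (B : 'M[R]_(n, m)) (E : 'M[R]_(n, l)) (H : 'M[R]_(p, n))
  (F : 'M[R]_(m, n)) :
  H2norm2 (impulse_resp A B E H F) = 0%E <->
  exists (k : nat) (X : 'M[R]_k) (V : 'M[R]_(n, k)),
    V *m X - B *m F *m V = A *m V /\
    (E^T <= V^T)%MS /\ (* im E ⊆ im V (column spaces) *)
    H *m V = 0.        (* im V ⊆ ker H *)
Proof.
pose M := A + B *m F.
pose xg (i : 'I_p) (j : 'I_l) := fun k => (H *m M ^+ k *m E) i j.
have gE t i j : impulse_resp A B E H F t i j = limn (series (u (xg i j) t)).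
  by rewrite /impulse_resp entry_series.
have fE : (fun t => (\tr ((impulse_resp A B E H F t)^T *m impulse_resp A B E H F t))%:E)
   = (fun t => (\sum_i \sum_j (limn (series (u (xg j i) t))) ^+ 2)%:E).
  apply/funext => t; rewrite tr_sq; congr (_%:E); apply: eq_bigr => i _.
  by apply: eq_bigr => j _; rewrite gE.
rewrite /H2norm2 fE; split.
- move=> hi.
  have mf : measurable_fun (`[0%R, +oo[ : set R)
      (fun t => (\sum_i \sum_j (limn (series (u (xg j i) t))) ^+ 2)%:E).
    apply/measurable_EFinP; apply: measurable_sum => i; apply: measurable_sum => j.
    apply: measurable_funX.
    apply: (@measurable_fun_cvg _ _ _ _ (fun N t => series (u (xg j i) t) N)).
      move=> N; rewrite /series /=; apply: measurable_sum => k.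
      apply: measurable_funM; first exact: measurable_cst.
      apply: measurable_funM; [exact: exprn_measurable | exact: measurable_cst].
    move=> t _; apply: u_cvg; exact: entry_good.
  have f0 t : (0 <= (\sum_i \sum_j (limn (series (u (xg j i) t))) ^+ 2)%:E)%E.
    by rewrite lee_fin sumr_ge0 // => i _; rewrite sumr_ge0 // => j _; rewrite sqr_ge0.
  have hz := ae_small hi mf f0.
  have HK : forall k, H *m M ^+ k *m E = 0.
    move=> k; apply/matrixP => i j; rewrite [RHS]mxE.
    apply: (@ps_zero _ (xg i j) (entry_good H M E i j)) => d d0.
    have [t [t0 [td [t1 ft]]]] := hz d d0.
    exists t; do 3 (split => //).
    move: ft => /eqP; rewrite eqe => /eqP /psumr_eq0P h1.
    have h2 := h1 (fun j' _ => sumr_ge0 _ (fun i' _ => sqr_ge0 _)) j isT.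
    move: h2 => /psumr_eq0P h3.
    have := h3 (fun i' _ => sqr_ge0 _) i isT.
    by move/eqP; rewrite sqrf_eq0 => /eqP.
  have [k [X [V [h1 [h2 h3]]]]] := krylov HK.
  exists k, X, V; split => //.
  by rewrite h1 /M mulmxDl addrK.
- case=> k [X [V [h1 [h2 h3]]]].
  have MV : M *m V = V *m X by rewrite /M mulmxDl -h1 subrK.
  have MkV k' : M ^+ k' *m V = V *m X ^+ k'.
    elim: k' => [|k' IH]; first by rewrite !expr0 mul1mx mulmx1.
    by rewrite exprS -mulmxE -mulmxA IH mulmxA MV -mulmxA mulmxE -exprS.
  have [D hD] := submxP h2.
  have EV : E = V *m D^T by rewrite -[E]trmxK hD trmx_mul trmxK.
  have x0 i j k' : xg i j k' = 0.
    by rewrite /xg EV mulmxA -(mulmxA H) MkV mulmxA h3 !mul0mx mxE.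
  apply: integral0_eq => t _.
  rewrite big1 // => i _; rewrite big1 // => j _.
  have -> : u (xg j i) t = fun _ => 0 by apply/funext => k'; rewrite /u x0 !mulr0.
  have -> : series (fun _ : nat => (0 : R)) = fun _ => 0.
    by apply/funext => N; rewrite /series /= big1.
  rewrite lim_cst ?expr0n //; exact: norm_hausdorff.
Qed.
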